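(* Let $F$ be an arbitrary field and let $f\in F\langle X\rangle$ be a nonzero multilinear polynomial of degree $d$. Let $n\ge 2$ be such that $d<2n$. If $c\in M_n(F)$ satisfies $$f(c,a_2,\ldots,a_d)=f(a_1,c,a_3,\ldots,a_d)=\cdots=f(a_1,\ldots,a_{d-1},c)=0$$ for all $a_1,\ldots,a_d\in M_n(F)$, then $c\in F\cdot 1$.
   Context: $F\langle X\rangle$ is the free algebra over $F$ in countably many noncommuting indeterminates $x_1,x_2,\ldots$. A polynomial $f=f(x_1,\ldots,x_d)$ is multilinear of degree $d$ if $f=\sum_{\sigma\in S_d}\lambda_\sigma x_{\sigma(1)}\cdots x_{\sigma(d)}$ with $\lambda_\sigma\in F$. $1$ denotes the identity matrix. *)

(* Defs.v *)
From HB Require Import structures.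
From mathcomp Require Import all_boot all_order all_algebra all_fingroup.
Set Implicit Arguments. Unset Strict Implicit. Unset Printing Implicit Defensive.
Import GRing.Theory.
Local Open Scope ring_scope.

(* A multilinear polynomial of degree d in F<X>,
     f = \sum_{sigma in S_d} lam_sigma x_{sigma(1)} ... x_{sigma(d)},
   is represented by its coefficient family lam : {ffun 'S_d -> F}.
   Distinct permutations give distinct monomials, so f <> 0 iff lam <> 0. *)
Definition mlpoly (F : fieldType) (d : nat) := {ffun 'S_d -> F}.

Definition mxprod_perm (F : fieldType) (n d : nat) (s : 'S_d)
    (a : 'I_d -> 'M[F]_n) : 'M[F]_n :=
  foldr (fun i acc => a (s i) *m acc) 1%:M (enum 'I_d).

Definition mleval (F : fieldType) (n d : nat) (f : mlpoly F d)
    (a : 'I_d -> 'M[F]_n) : 'M[F]_n :=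
  \sum_(s : 'S_d) f s *: mxprod_perm s a.

Definition subst_at (F : fieldType) (n d : nat) (i : 'I_d) (c : 'M[F]_n)
    (a : 'I_d -> 'M[F]_n) : 'I_d -> 'M[F]_n :=
  fun j => if j == i then c else a j.

(* Main.v *)
Require Import Defs.
From HB Require Import structures.
From mathcomp Require Import all_boot all_order all_algebra all_fingroup.
From mathcomp Require Import zify.
Import GRing.Theory.
Local Open Scope ring_scope.

Section Comb.
Variables (F : fieldType) (n' d : nat).
Local Notation N := n'.+2.
Hypothesis hdn : (d < 2 * N)%N.
Variable X : 'M[F]_N.

Definition Eu (t : nat) : 'M[F]_N := delta_mx (inord (t./2)) (inord (uphalf t)).
Definition Bm (t : nat) : 'M[F]_N := if t == 1%N then X else Eu t.
Definition Gm (l : seq nat) : 'M[F]_N := foldr (fun t acc => Bm t *m acc) 1%:M l.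

Lemma bnd t : (t < d)%N -> (t./2 < N)%N /\ (uphalf t < N)%N.
Proof. move=> ht; split; lia. Qed.

Lemma mul_delta_l (a b : 'I_N) (M : 'M[F]_N) p q :
  (delta_mx a b *m M) p q = (p == a)%:R * M b q.
Proof.
rewrite mxE (bigD1 b) //= big1 ?addr0; first by rewrite mxE eqxx andbT.
by move=> j /negbTE hj; rewrite mxE hj andbF mul0r.
Qed.

Lemma mul_delta_r (a b : 'I_N) (M : 'M[F]_N) p q :
  (M *m delta_mx a b) p q = M p a * (q == b)%:R.
Proof.
rewrite mxE (bigD1 a) //= big1 ?addr0; first by rewrite mxE eqxx.
by move=> j /negbTE hj; rewrite mxE hj /= mulr0.
Qed.

Lemma Gm_cons t l p q : t != 1%N -> (t < d)%N ->
  (Gm (t :: l)) p q = (nat_of_ord p == t./2)%:R * (Gm l) (inord (uphalf t)) q.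
Proof.
move=> t1 td; rewrite /= /Bm (negbTE t1) /Eu mul_delta_l.
have [b1 _] := bnd t td.
by rewrite -val_eqE /= (inordK b1).
Qed.

Lemma Gm_cat s1 s2 : Gm (s1 ++ s2) = Gm s1 *m Gm s2.
Proof. by elim: s1 => [|t s1 IH] /=; rewrite ?mul1mx // IH mulmxA. Qed.

Lemma natr_neq0 (b : bool) : (b%:R : F) != 0 -> b.
Proof. by case: b => //=; rewrite eqxx. Qed.

Definition okl (l : seq nat) := all (fun t => (t < d)%N && (t != 1%N)) l.

Lemma Lb l k : okl l -> Gm l (inord 0) k != 0 ->
  nat_of_ord k = 0%N /\ all (fun t => t == 0%N) l.
Proof.
elim: l k => [|t l IH] k /=.
  move=> _; rewrite mxE => /natr_neq0 /eqP <-; split => //; rewrite inordK //.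
move=> /andP[/andP[td t1] hl].
rewrite Gm_cons // mulf_eq0 negb_or => /andP[/natr_neq0 /eqP h0 h].
rewrite inordK // in h0.
have t0 : t = 0%N by lia.
subst t; have [-> ->] := IH k hl h; done.
Qed.

Lemma La l p q : okl l -> uniq l -> Gm l p q != 0 ->
  sorted ltn l /\ all (fun t => 2 * nat_of_ord p <= t)%N l.
Proof.
elim: l p => [|t l IH] p //=.
move=> /andP[/andP[td t1] hl] /andP[tl ul].
rewrite Gm_cons // mulf_eq0 negb_or => /andP[/natr_neq0 /eqP hp h].
have [sl al] := IH _ hl ul h.
have [_ b2] := bnd t td.
rewrite inordK // in al.
have alt : all (ltn t) l.
  apply/allP => x xl; have h2 := allP al x xl.
  have /eqP xt : x != t by apply: contraNneq tl => <-.
  rewrite /ltn /=; lia.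
rewrite (path_sortedE ltn_trans) alt sl; split => //.
rewrite hp; apply/andP; split; first lia.
apply/allP => x xl; have := allP alt x xl; rewrite /ltn /=; lia.
Qed.

Lemma sum_neq0 (G : 'I_N -> F) : \sum_i G i != 0 -> exists i, G i != 0.
Proof.
move=> h; case: (pickP (fun i => G i != 0)) => [i hi|hn]; first by exists i.
by move: h; rewrite big1 ?eqxx // => i _; move: (hn i) => /negbFE /eqP.
Qed.

Lemma Lv k : forall t0 p, (t0 + k = d)%N -> (2 <= t0)%N ->
  Gm (iota t0 k) p (inord (d./2)) = (nat_of_ord p == uphalf t0.-1)%:R.
Proof.
elim: k => [|k IH] t0 p htd h2.
  rewrite /= mxE addn0 in htd *; subst t0.
  have [_ b] := bnd d.-1 ltac:(lia).
  have e : uphalf d.-1 = d./2 by rewrite uphalfE prednK //; lia.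
  rewrite e in b *; rewrite -val_eqE /= (inordK b) //.
rewrite /= -/(Gm _) Gm_cons; [|lia|lia].
have [_ b] := bnd t0 ltac:(lia).
rewrite IH; [|lia|lia] => /=.
rewrite (inordK b) eqxx mulr1.
by have -> : uphalf t0.-1 = t0./2 by rewrite uphalfE prednK //; lia.
Qed.

Hypothesis hd1 : (1 < d)%N.

Lemma Lid : Gm (iota 0 d) (inord 0) (inord (d./2)) = X (inord 0) (inord 1).
Proof.
have -> : iota 0 d = [:: 0%N, 1%N & iota 2 (d - 2)].
  by case: d hd1 => [|[|d']] //= _; rewrite subn2.
rewrite Gm_cons //; last lia.
rewrite (inordK (isT : (0 < N)%N)) /= mul1r.
rewrite -/(Gm _) /Bm /= mxE (bigD1 (inord 1)) //= big1 ?addr0.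
  by rewrite Lv; [rewrite /= (inordK (isT : (1 < N)%N)) mulr1| lia| lia].
move=> j hj; rewrite Lv; [|lia|lia].
have -> : (nat_of_ord j == uphalf 1) = false.
  apply/negbTE; apply: contra hj => /eqP hj; apply/eqP/val_inj.
  by rewrite /= hj inordK.
by rewrite mulr0.
Qed.

Lemma Lmain l : uniq l -> (forall t, (t \in l) = (t < d)%N) ->
  Gm l (inord 0) (inord (d./2)) != 0 -> l = iota 0 d.
Proof.
move=> ul ml.
have bm : (d./2 < N)%N by lia.
have m0 : nat_of_ord (inord (d./2) : 'I_N) != 0%N by rewrite inordK //; lia.
have l1 : (1%N \in l) by rewrite ml.
move: ul ml; case/splitPr: l1 => b a.
rewrite cat_uniq /= => /and4P[ub /norP[b1 hab] a1 ua] ml.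
have okb : okl b.
  apply/allP => t tb; rewrite -ml mem_cat tb /=.
  by apply: contraNneq b1 => <-.
have oka : okl a.
  apply/allP => t ta; rewrite -ml mem_cat inE ta !orbT /=.
  by apply: contraNneq a1 => <-.
rewrite Gm_cat mxE => /sum_neq0[k]; rewrite mulf_eq0 negb_or => /andP[hb].
rewrite /= /Bm /= mxE => /sum_neq0[j]; rewrite mulf_eq0 negb_or => /andP[_ ha].
have [k0 b0] := Lb b k okb hb.
have [sa aa] := La a j (inord (d./2)) oka ua ha.
have a0 : 0%N \notin a.
  apply/negP => a0.
  case: a a0 a1 ua ml hab oka sa aa ha => [|t a'] //.
  rewrite inE => /orP[/eqP t0|a0'].
    subst t => _ _ _ _ /= /andP[_ oka'] _ _.
    rewrite Gm_cons; [|done|lia]; rewrite mulf_eq0 negb_or => /andP[_ h].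
    by have [/eqP] := Lb _ _ oka' h; rewrite (negbTE m0).
  move=> _ _ _ _ _ /=; rewrite (path_sortedE ltn_trans) => /andP[/allP al _].
  by have := al _ a0'.
have b0in : 0%N \in b.
  have := ml 0%N; rewrite mem_cat inE (negbTE a0) /= orbF => ->; exact: ltnW hd1.
have eb : b = [:: 0%N].
  case: b ub b1 hab okb hb b0 b0in {ml} => [|x [|y b']] //=.
    by move=> _ _ _ _ _ /andP[/eqP -> _].
  move=> /andP[]; rewrite inE negb_or => /andP[xy _] _ _ _ _ _ /and3P[/eqP x0 /eqP y0 _].
  by rewrite x0 y0 eqxx in xy.
subst b.
apply: (irr_sorted_eq ltn_trans ltnn); last 2 first.
- exact: iota_ltn_sorted.
- by move=> t; rewrite ml mem_iota.
rewrite /= (path_sortedE ltn_trans) sa andbT /=.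
apply/allP => t ta; have /andP[_ t1] := allP oka t ta.
have t0 : t != 0%N by apply: contraNneq a0 => <-.
by case: t t0 t1 {ta} => [|[|t]].
Qed.
End Comb.
Section Conj.
Variables (F : fieldType) (n d : nat) (f : mlpoly F d).
Definition good (c : 'M[F]_n) := forall i a, mleval f (subst_at i c a) = 0.

Lemma conj_prod (P Q : 'M[F]_n) (s : 'S_d) a1 a2 : Q *m P = 1%:M -> P *m Q = 1%:M ->
  (forall j, a2 j = P *m a1 j *m Q) -> mxprod_perm s a2 = P *m mxprod_perm s a1 *m Q.
Proof.
move=> QP PQ h; rewrite /mxprod_perm; elim: (enum 'I_d) => [|i r IH] /=.
  by rewrite mulmx1 PQ.
rewrite h IH -!mulmxA; congr (P *m (_ *m _)); by rewrite mulmxA QP mul1mx.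
Qed.

Lemma good_conj (P Q c : 'M[F]_n) : P *m Q = 1%:M -> Q *m P = 1%:M -> good c ->
  good (P *m c *m Q).
Proof.
move=> PQ QP hc i a.
pose a1 j := Q *m a j *m P.
have h : forall j, subst_at i (P *m c *m Q) a j = P *m subst_at i c a1 j *m Q.
  move=> j; rewrite /subst_at; case: (j == i) => //.
  by rewrite /a1 !mulmxA PQ mul1mx -mulmxA PQ mulmx1.
transitivity (P *m mleval f (subst_at i c a1) *m Q); last by rewrite hc mulmx0 mul0mx.
rewrite /mleval mulmx_sumr mulmx_suml; apply: eq_bigr => s _.
by rewrite (conj_prod _ _ s _ _ QP PQ h) -scalemxAr -scalemxAl.
Qed.
End Conj.

Section Cases.
Variables (F : fieldType) (n' d : nat) (f : mlpoly F d).
Local Notation N := n'.+2.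
Local Notation o0 := (inord 0 : 'I_N).
Local Notation o1 := (inord 1 : 'I_N).
Local Notation goodf := (@good F N d f).

Lemma offdiag (c : 'M[F]_N) p q : p != q -> c p q != 0 -> goodf c ->
  exists X, goodf X /\ X o0 o1 != 0.
Proof.
move=> pq cpq hc.
have o01 : o0 != o1 by rewrite -val_eqE /= !inordK.
pose s1 := tperm o0 p. pose q' := s1 q. pose s2 := tperm o1 q'.
pose s := (s2 * s1)%g.
have q'0 : q' != o0.
  by rewrite /q' /s1 (canF_eq (tpermK o0 p)) tpermL eq_sym.
have hs0 : s o0 = p.
  rewrite /s permM /s2 tpermD; [by rewrite /s1 tpermL| by rewrite eq_sym| by []].
have hs1 : s o1 = q by rewrite /s permM /s2 tpermL /q' /s1 tpermK.
exists (perm_mx s *m c *m perm_mx s^-1); split.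
  by apply: (good_conj _ _ _ _ _ _ _ _ _ hc); rewrite -perm_mxM ?mulgV ?mulVg perm_mx1.
by rewrite -row_permE -col_permE !mxE hs0 hs1.
Qed.

Lemma diagcase (c : 'M[F]_N) q : (forall p q, p != q -> c p q = 0) ->
  c q q != c o0 o0 -> goodf c -> exists X, goodf X /\ X o0 o1 != 0.
Proof.
move=> hd hq hc.
have q0 : q != o0 by apply: contraNneq hq => ->.
pose D : 'M[F]_N := delta_mx o0 q.
have DD : D *m D = 0 by rewrite /D mul_delta_mx_cond (negbTE q0) mulr0n.
have PQ : (1%:M + D) *m (1%:M - D) = 1%:M.
  by rewrite mulmxDl mul1mx mulmxBr mulmx1 DD subr0 subrK.
have QP : (1%:M - D) *m (1%:M + D) = 1%:M.
  by rewrite mulmxBl mul1mx mulmxDr mulmx1 DD addr0 addrK.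
apply: (offdiag _ o0 q _ _ (good_conj _ _ _ _ _ _ _ PQ QP hc)); first by rewrite eq_sym.
rewrite mulmxDl mul1mx mulmxBr mulmx1 mulmxDl opprD !addrA.
rewrite -mulmxA.
have -> : (c + D *m c - c *m D - D *m (c *m D)) o0 q =
   c o0 q + (D *m c) o0 q - (c *m D) o0 q - (D *m (c *m D)) o0 q by rewrite !mxE.
have q0' : o0 != q by rewrite eq_sym.
rewrite /D !mul_delta_l !mul_delta_r !eqxx mul1r !mulr1 mul1r (hd _ _ q0) (hd _ _ q0').
by rewrite add0r subr0 subr_eq0.
Qed.
End Cases.

Section Final.
Variables (F : fieldType) (n' d : nat) (f : mlpoly F d).
Local Notation N := n'.+2.
Hypothesis hdn : (d < 2 * N)%N.
Hypothesis hd1 : (1 < d)%N.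
Local Notation o1d := (Ordinal hd1).

Lemma prod_Gm (s0 s : 'S_d) (X : 'M[F]_N) :
  mxprod_perm s (subst_at (s0 o1d) X (fun j => Eu F n' (val ((s0^-1)%g j)))) =
  Gm F n' X (map (fun i => val ((s0^-1)%g (s i))) (enum 'I_d)).
Proof.
rewrite /mxprod_perm; elim: (enum 'I_d) => //= i r ->; congr (_ *m _).
rewrite /subst_at /Bm.
have -> : (val ((s0^-1)%g (s i)) == 1%N) = (s i == s0 o1d).
  by rewrite -[1%N]/(val o1d) val_eqE (canF_eq (permKV s0)).
done.
Qed.

Lemma entry_main (s0 : 'S_d) (X : 'M[F]_N) :
  (mleval f (subst_at (s0 o1d) X (fun j => Eu F n' (val ((s0^-1)%g j)))))
     (inord 0) (inord (d./2)) = f s0 * X (inord 0) (inord 1).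
Proof.
rewrite /mleval summxE (bigD1 s0) //= big1 ?addr0.
  rewrite mxE prod_Gm.
  have -> : [seq val ((s0^-1)%g (s0 i)) | i <- enum 'I_d] = iota 0 d.
    by rewrite -val_enum_ord; apply: eq_map => i; rewrite permK.
  by rewrite (Lid _ _ _ hdn X hd1).
move=> s hs; rewrite mxE prod_Gm.
apply/eqP; rewrite mulf_eq0; apply/orP; right; apply/negPn/negP => h.
have ul : uniq [seq val ((s0^-1)%g (s i)) | i <- enum 'I_d].
  rewrite map_inj_uniq ?enum_uniq // => x y /val_inj /perm_inj /perm_inj //.
have ml : forall t, (t \in [seq val ((s0^-1)%g (s i)) | i <- enum 'I_d]) = (t < d)%N.
  move=> t; apply/mapP/idP; first by case=> i _ ->; apply: ltn_ord.
  move=> ht.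
  exists ((s^-1)%g (s0 (Ordinal ht))); first by rewrite mem_enum.
  by rewrite permKV permK.
have := Lmain _ _ _ hdn X hd1 _ ul ml h.
rewrite -val_enum_ord => /eq_in_map e.
move: hs => /eqP; apply; apply/permP => i.
have /val_inj := e i (mem_enum _ i).
by move/(congr1 s0); rewrite permKV.
Qed.

Lemma contra_main (s0 : 'S_d) (X : 'M[F]_N) : f s0 != 0 -> good F N d f X ->
  X (inord 0) (inord 1) != 0 -> False.
Proof.
move=> fs0 gX X01.
have := gX (s0 o1d) (fun j => Eu F n' (val ((s0^-1)%g j))).
move/(congr1 (fun M : 'M[F]_N => M (inord 0) (inord (d./2)))).
rewrite entry_main mxE => /eqP; rewrite mulf_eq0.
by rewrite (negbTE fs0) (negbTE X01).
Qed.
End Final.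


Theorem lemma2p3 (F : fieldType) (d n : nat) (f : mlpoly F d)
  (hf : f <> 0) (hd : (0 < d)%N) (hn : (2 <= n)%N) (hdn : (d < 2 * n)%N)
  (c : 'M[F]_n)
  (hc : forall (i : 'I_d) (a : 'I_d -> 'M[F]_n), mleval f (subst_at i c a) = 0) :
  exists l : F, c = l%:M.
Proof.
have [s0 fs0] : exists s0, f s0 != 0.
  case: (pickP (fun s => f s != 0)) => [s hs|hn']; first by exists s.
  exfalso; apply: hf; apply/ffunP => s; rewrite ffunE; apply/eqP.
  by move: (hn' s) => /negbFE.
have [d1|d2] := leqP d 1.
  have e : d = 1%N by apply/eqP; rewrite eqn_leq d1 hd.
  subst d; exists 0.
  have ps : forall s : 'S_1, s = 1%g by move=> s; apply/permP => i; rewrite !ord1.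
  have := hc ord0 (fun _ => 0).
  rewrite /mleval (eq_bigr (fun s => f s *: c)); last first.
    move=> s _; rewrite /mxprod_perm enum_ordSl enum_ord0 /= mulmx1 /subst_at.
    by rewrite (ps s) perm1 eqxx.
  rewrite -scaler_suml (bigD1 1%g) //= big1 ?addr0; last first.
    by move=> s /eqP []; rewrite (ps s).
  move/eqP; rewrite scaler_eq0 -(ps s0) (negbTE fs0) /= => /eqP ->.
  by apply/matrixP => i j; rewrite !mxE mul0rn.
case: n c hc hn hdn => [|[|n']] // c hc _ hdn.
have gc : good F n'.+2 d f c := hc.
pose o0 : 'I_n'.+2 := inord 0.
case: (boolP [exists p, exists q, (p != q) && (c p q != 0)]).
  case/existsP=> p /existsP[q /andP[pq cpq]].
  have [X [gX X01]] := offdiag _ _ _ _ _ _ _ pq cpq gc.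
  by case: (contra_main _ _ _ _ hdn d2 s0 X fs0 gX X01).
move=> hno.
have hoff : forall p q, p != q -> c p q = 0.
  move=> p q pq; apply/eqP; apply: contraNT hno => cpq.
  by apply/existsP; exists p; apply/existsP; exists q; rewrite pq.
case: (boolP [exists q, c q q != c o0 o0]).
  case/existsP=> q hq.
  have [X [gX X01]] := diagcase _ _ _ _ _ _ hoff hq gc.
  by case: (contra_main _ _ _ _ hdn d2 s0 X fs0 gX X01).
move=> hnd; exists (c o0 o0); apply/matrixP => i j; rewrite mxE.
case: (eqVneq i j) => [<-|ij]; last by rewrite hoff // mulr0n.
rewrite mulr1n; apply/eqP; apply: contraNT hnd => h.
by apply/existsP; exists i.
Qed.
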